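(* Let $F_1$ and $F_2$ be vertex-disjoint fans and let $c_i:F_i\to T_7$ ($i=1,2$) be homomorphisms such that $c_i(r(F_i))=0$, $c_i(fl(F_i))\neq 0$ and $c_i(ll(F_i))\neq 0$. Then for every choice of directions of the arcs $s_1$ and $s_2$, the composition $F=F_1+F_2$ admits two homomorphisms $d_1,d_2:F\to T_7$ such that (c1) $d_1(x)=d_2(x)=c_1(x)$ for all vertices $x$ of $F_1$, and (c2) $d_1(ll(F))\neq d_2(ll(F))$.
   Context: $T_7$ is the tournament with vertex set $\{0,1,\dots,6\}$ in which $(i,j)$ is an arc if and only if $j-i\equiv 1,2,$ or $4 \pmod 7$. A homomorphism $c:F\to T_7$ of an oriented graph $F$ is a map on vertices such that $(c(u),c(v))$ is an arc of $T_7$ whenever $(u,v)$ is an arc of $F$. A fan $F$ is an oriented planar graph consisting of an oriented rooted plane tree (children of each vertex linearly ordered, as given by the planar embedding) with root $r=r(F)$, whose leaves (the vertices other than the root with no children), listed in left-to-right order, are $x_1,\dots,x_m$ ($m\ge 1$), together with, for each $1\le i\le m-1$, one arc between $x_i$ and $x_{i+1}$ (either $(x_i,x_{i+1})$ or $(x_{i+1},x_i)$). Write $fl(F)=x_1$ (first leaf) and $ll(F)=x_m$ (last leaf). The composition $F=F_1+F_2$ of two fans is the fan obtained from the disjoint union of $F_1$ and $F_2$ by adding an arc $s_1$ between $r(F_1)$ and $r(F_2)$ (in either direction) and an arc $s_2$ between $ll(F_1)$ and $fl(F_2)$ (in either direction); its root is $r(F)=r(F_1)$, $r(F_2)$ becomes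 the last child of $r(F_1)$, $fl(F)=fl(F_1)$ and $ll(F)=ll(F_2)$. *)

(* Defs.v *)
From mathcomp Require Import all_boot.
Set Implicit Arguments. Unset Strict Implicit. Unset Printing Implicit Defensive.

Definition T7arc (i j : 'I_7) : bool := ((j + 7 - i) %% 7) \in [:: 1; 2; 4].

(* Oriented rooted plane trees: a node is the ordered list of its children,
   each child tagged with the direction of the tree edge:
   true = (parent, child) is the arc, false = (child, parent) is the arc. *)
Inductive ptree : Type := Node of seq (bool * ptree).

Definition children (t : ptree) : seq (bool * ptree) := let: Node cs := t in cs.

(* Vertices are addressed by paths from the root: [::] is the root and
   rcons a i is the i-th child (0-based, left to right) of the vertex a. *)
Fixpoint subtree (t : ptree) (a : seq nat) : option ptree :=
  match a with
  | [::] => Some t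
  | i :: a' => match ohead (drop i (children t)) with
               | Some (_, t') => subtree t' a'
               | None => None
               end
  end.

Definition is_vertex (t : ptree) (a : seq nat) : bool :=
  if subtree t a is Some _ then true else false.

Definition child_dir (t : ptree) (a : seq nat) (i : nat) : option bool :=
  match subtree t a with
  | Some t' => omap fst (ohead (drop i (children t')))
  | None => None
  end.

Fixpoint lv (t : ptree) : seq (seq nat) :=
  let: Node cs := t in
  if cs is [::] then [:: [::]] else
  (fix aux (i : nat) (cs : seq (bool * ptree)) : seq (seq nat) :=
     match cs with
     | [::] => [::]
     | (_, c) :: cs' => map (cons i) (lv c) ++ aux i.+1 cs'
     end) 0 cs.

(* A fan: a tree together with the directions of the arcs between consecutive
   leaves (true = (x_k, x_{k+1}), false = (x_{k+1}, x_k)). *)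
Definition fan : Type := (ptree * seq bool)%type.

(* leaves: non-root vertices with no children, in left-to-right order *)
Definition leaves (F : fan) : seq (seq nat) :=
  if children F.1 is [::] then [::] else lv F.1.

(* well-formedness: m >= 1 leaves and exactly m-1 leaf-path arcs *)
Definition fan_wf (F : fan) : Prop := size (leaves F) = (size F.2).+1.

Definition fan_root (F : fan) : seq nat := [::].
Definition fl (F : fan) : seq nat := head [::] (leaves F).
Definition ll (F : fan) : seq nat := last [::] (leaves F).

Definition vertex (F : fan) (a : seq nat) : bool := is_vertex F.1 a.

Definition arc (F : fan) (u v : seq nat) : Prop :=
  (exists i, v = rcons u i /\ child_dir F.1 u i = Some true) \/
  (exists i, u = rcons v i /\ child_dir F.1 v i = Some false) \/
  (exists k, k.+1 < size (leaves F) /\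
     ((nth [::] (leaves F) k = u /\ nth [::] (leaves F) k.+1 = v /\ nth true F.2 k = true) \/
      (nth [::] (leaves F) k = v /\ nth [::] (leaves F) k.+1 = u /\ nth true F.2 k = false))).

(* homomorphism F -> T_7 (values outside the vertex set are irrelevant) *)
Definition hom (F : fan) (c : seq nat -> 'I_7) : Prop :=
  forall u v, arc F u v -> T7arc (c u) (c v).

(* Composition F1 + F2 with s1 the direction of the arc between r(F1) and
   r(F2) (true = (r(F1), r(F2))) and s2 the direction of the arc between
   ll(F1) and fl(F2) (true = (ll(F1), fl(F2))).  r(F2) becomes the last child
   of r(F1); a vertex x of F1 keeps its address x, and a vertex y of F2 gets
   the address (size (children F1.1)) :: y (so the union is disjoint). *)
Definition compose (F1 F2 : fan) (s1 s2 : bool) : fan :=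
  (Node (children F1.1 ++ [:: (s1, F2.1)]), F1.2 ++ s2 :: F2.2).

(* Main.v *)
Require Import Defs.
From mathcomp Require Import all_boot.

Fixpoint myaux (i : nat) (cs : seq (bool * ptree)) : seq (seq nat) :=
  match cs with
  | [::] => [::]
  | (_, c) :: cs' => map (cons i) (lv c) ++ myaux i.+1 cs'
  end.

Lemma lvE cs : lv (Node cs) = if cs is [::] then [:: [::]] else myaux 0 cs.
Proof. by case: cs. Qed.

Lemma myaux_cat i cs cs' : myaux i (cs ++ cs') = myaux i cs ++ myaux (i + size cs) cs'.
Proof.
elim: cs i => [|[b c] cs IH] i /=; first by rewrite addn0.
by rewrite IH catA addSnnS.
Qed.

Lemma myaux_head i cs x : x \in myaux i cs -> exists j a, x = j :: a /\ i <= j < i + size cs.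
Proof.
elim: cs i => [|[b c] cs IH] i //=.
rewrite mem_cat => /orP [/mapP [a _ ->]|/IH [j [a [-> /andP [H1 H2]]]]].
  by exists i, a; rewrite leqnn addnS ltnS leq_addr.
by exists j, a; split => //; rewrite ltnW //= addnS -addSn.
Qed.

Lemma ohead_drop_cat (cs : seq (bool * ptree)) x i :
  ohead (drop i (cs ++ [:: x])) =
  if i < size cs then ohead (drop i cs) else if i == size cs then Some x else None.
Proof.
rewrite drop_cat; case: ltnP => H.
  case E: (drop i cs) => [|y t] //.
  by move: (size_drop i cs); rewrite E => /esym /eqP; rewrite subn_eq0 leqNgt H.
case: eqP => [->|ne]; first by rewrite subnn.
have : 0 < i - size cs by rewrite subn_gt0 ltn_neqAle H andbT; apply/eqP => E; apply: ne.
by case: (i - size cs).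
Qed.

Lemma child_dir_nil cs x i : child_dir (Node (cs ++ [:: x])) [::] i =
  if i < size cs then child_dir (Node cs) [::] i else if i == size cs then Some x.1 else None.
Proof. by rewrite /child_dir /= ohead_drop_cat; case: ifP => //; case: ifP. Qed.

Lemma child_dir_cons cs b t j a i : child_dir (Node (cs ++ [:: (b, t)])) (j :: a) i =
  if j < size cs then child_dir (Node cs) (j :: a) i
  else if j == size cs then child_dir t a i else None.
Proof. by rewrite /child_dir /= ohead_drop_cat; case: ifP => //; case: ifP. Qed.

Lemma leaves_comp (cs1 : seq (bool * ptree)) l1 t2 l2 s1 s2 :
  leaves (compose (Node cs1, l1) (t2, l2) s1 s2) =
  myaux 0 cs1 ++ map (cons (size cs1)) (lv t2).
Proof.
transitivity (myaux 0 (cs1 ++ [:: (s1, t2)])); first by case: cs1.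
by rewrite myaux_cat /= cats0.
Qed.

Lemma hom_leaf F c k : hom F c -> k.+1 < size (leaves F) ->
  if nth true F.2 k then T7arc (c (nth [::] (leaves F) k)) (c (nth [::] (leaves F) k.+1))
  else T7arc (c (nth [::] (leaves F) k.+1)) (c (nth [::] (leaves F) k)).
Proof.
move=> hF Hk; case E: (nth true F.2 k); apply: hF; right; right; exists k; split => //.
  by left.
by right.
Qed.

Definition dmap (k : nat) (c1 c2 : seq nat -> 'I_7) (phi : 'I_7 -> 'I_7) (x : seq nat) : 'I_7 :=
  if x is j :: y then (if j == k then phi (c2 y) else c1 x) else c1 x.

Lemma dmapF1 k c1 c2 phi x : x \in myaux 0 k -> dmap (size k) c1 c2 phi x = c1 x.
Proof. by move/myaux_head => [j [a [-> /andP [_ H]]]] /=; rewrite ltn_eqF. Qed.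

Lemma leavesN cs (l : seq bool) : cs <> [::] -> leaves (Node cs, l) = myaux 0 cs.
Proof. by case: cs. Qed.
Lemma lvN cs : cs <> [::] -> lv (Node cs) = myaux 0 cs.
Proof. by case: cs. Qed.

Definition arcn (i j : nat) : bool := ((j + 7 - i) %% 7) \in [:: 1; 2; 4].
Definition affn (a b x : nat) : nat := (a * x + b) %% 7.
Definition aff (a b : nat) (x : 'I_7) : 'I_7 := Ordinal (ltn_pmod (a * x + b) (erefl true : 0 < 7)).

Lemma T7arcE (x y : 'I_7) : T7arc x y = arcn x y. Proof. by []. Qed.
Lemma affE a b x : val (aff a b x) = affn a b x. Proof. by []. Qed.

Lemma aff_hom_key : all (fun a => all (fun b => all (fun x => all (fun y =>
   arcn x y ==> arcn (affn a b x) (affn a b y)) (iota 0 7)) (iota 0 7)) (iota 0 7)) [:: 1; 2; 4].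
Proof. by vm_compute. Qed.

Lemma aff_hom a b x y : a \in [:: 1; 2; 4] -> b < 7 -> T7arc x y -> T7arc (aff a b x) (aff a b y).
Proof.
move=> Ha Hb; rewrite !T7arcE !affE.
have Hx : (x : nat) \in iota 0 7 by rewrite mem_iota ltn_ord.
have Hy : (y : nat) \in iota 0 7 by rewrite mem_iota ltn_ord.
have Hb' : b \in iota 0 7 by rewrite mem_iota.
move/allP: aff_hom_key => /(_ a Ha) /allP /(_ b Hb') /allP /(_ x Hx) /allP /(_ y Hy).
by move/implyP.
Qed.

Definition cands : seq (nat * nat) := [seq (a, b) | a <- [:: 1; 2; 4], b <- iota 0 7].
Definition validn (s1 s2 : bool) (p q a b : nat) : bool :=
  (if s1 then arcn 0 (affn a b 0) else arcn (affn a b 0) 0) &&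
  (if s2 then arcn p (affn a b q) else arcn (affn a b q) p).

Lemma comb_key : all (fun s1 => all (fun s2 => all (fun p => all (fun q => all (fun r =>
  1 < size (undup [seq affn ab.1 ab.2 r | ab <- cands & validn s1 s2 p q ab.1 ab.2]))
  (iota 1 6)) (iota 1 6)) (iota 1 6)) [:: true; false]) [:: true; false].
Proof. by vm_compute. Qed.

Lemma comb s1 s2 (p q r : nat) : 0 < p < 7 -> 0 < q < 7 -> 0 < r < 7 ->
  exists a1 b1 a2 b2, [/\ a1 \in [:: 1; 2; 4], a2 \in [:: 1; 2; 4], b1 < 7, b2 < 7 &
    [/\ validn s1 s2 p q a1 b1, validn s1 s2 p q a2 b2 & affn a1 b1 r != affn a2 b2 r]].
Proof.
move=> Hp Hq Hr.
have Hs1 : s1 \in [:: true; false] by case: s1.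
have Hs2 : s2 \in [:: true; false] by case: s2.
have Hp' : p \in iota 1 6 by rewrite mem_iota.
have Hq' : q \in iota 1 6 by rewrite mem_iota.
have Hr' : r \in iota 1 6 by rewrite mem_iota.
move/allP: comb_key => /(_ s1 Hs1) /allP /(_ s2 Hs2) /allP /(_ p Hp') /allP /(_ q Hq')
   /allP /(_ r Hr').
set S := [seq _ | _ <- _].
move=> H.
have [x [y [Hx [Hy Hxy]]]] : exists x y, x \in S /\ y \in S /\ x != y.
  case E: (undup S) H => [|x [|y t]] // _.
  have U := undup_uniq S; rewrite E /= inE negb_or in U.
  case/andP: U => /andP [U _] _.
  have Hx : x \in undup S by rewrite E inE eqxx.
  have Hy : y \in undup S by rewrite E !inE eqxx orbT.
  by rewrite !mem_undup in Hx Hy; exists x, y.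
move: Hx Hy Hxy.
case/mapP => [[a1 b1]]; rewrite mem_filter => /andP [V1 /allpairsP [[a1' b1'] [Ha1 Hb1 /= [E1 E1']]]] ->.
case/mapP => [[a2 b2]]; rewrite mem_filter => /andP [V2 /allpairsP [[a2' b2'] [Ha2 Hb2 /= [E2 E2']]]] ->.
subst => /= Hne.
exists a1', b1', a2', b2'; split => //.
- by move: Hb1; rewrite mem_iota.
- by move: Hb2; rewrite mem_iota.
Qed.

Lemma hom_comp (cs1 cs2 : seq (bool * ptree)) l1 l2 (c1 c2 : seq nat -> 'I_7)
  (phi : 'I_7 -> 'I_7) s1 s2 :
  cs1 <> [::] -> cs2 <> [::] ->
  size (myaux 0 cs1) = (size l1).+1 ->
  size (myaux 0 cs2) = (size l2).+1 ->
  hom (Node cs1, l1) c1 -> hom (Node cs2, l2) c2 ->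
  (forall x y, T7arc x y -> T7arc (phi x) (phi y)) ->
  (if s1 then T7arc (c1 [::]) (phi (c2 [::])) else T7arc (phi (c2 [::])) (c1 [::])) ->
  (if s2 then T7arc (c1 (last [::] (myaux 0 cs1))) (phi (c2 (head [::] (myaux 0 cs2))))
   else T7arc (phi (c2 (head [::] (myaux 0 cs2)))) (c1 (last [::] (myaux 0 cs1)))) ->
  hom (compose (Node cs1, l1) (Node cs2, l2) s1 s2) (dmap (size cs1) c1 c2 phi).
Proof.
move=> ne1 ne2 hs hs2_ hF1 hF2 hphi hs1 hs2.
have L1E := @leavesN cs1 l1 ne1.
have L2E := @leavesN cs2 l2 ne2.
move=> u v [[i [-> H]] | [[i [-> H]] | [k' [Hk H]]]].
- rewrite /= in H; case: u H => [|j a] H.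
  + rewrite child_dir_nil in H; case: ltnP H => Hi H.
      rewrite /= ltn_eqF //; apply: hF1; left; exists i; split => //.
    case: eqP H => // -> [Es]; subst s1; rewrite /= eqxx; exact: hs1.
  + rewrite child_dir_cons in H; rewrite rcons_cons /=; case: ltnP H => Hj H.
      rewrite ltn_eqF //; apply: hF1; left; exists i; split => //.
    case: (j == size cs1) H => // H; apply: hphi; apply: hF2; left; exists i; split => //.
- rewrite /= in H; case: v H => [|j a] H.
  + rewrite child_dir_nil in H; case: ltnP H => Hi H.
      rewrite /= ltn_eqF //; apply: hF1; right; left; exists i; split => //.
    case: eqP H => // -> [Es]; subst s1; rewrite /= eqxx; exact: hs1.
  + rewrite child_dir_cons in H; rewrite rcons_cons /=; case: ltnP H => Hj H.
      rewrite ltn_eqF //; apply: hF1; right; left; exists i; split => //.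
    case: (j == size cs1) H => // H; apply: hphi; apply: hF2; right; left; exists i; split => //.
- rewrite leaves_comp (@lvN cs2 ne2) in Hk H.
  change ((compose _ _ _ _).2) with (l1 ++ s2 :: l2) in H.
  set L1 := myaux 0 cs1 in hs hs2 Hk H L1E.
  set L2 := myaux 0 cs2 in hs2 Hk H L2E.
  set d := dmap (size cs1) c1 c2 phi.
  suff key : if nth true (l1 ++ s2 :: l2) k'
      then T7arc (d (nth [::] (L1 ++ [seq size cs1 :: i | i <- L2]) k'))
                 (d (nth [::] (L1 ++ [seq size cs1 :: i | i <- L2]) k'.+1))
      else T7arc (d (nth [::] (L1 ++ [seq size cs1 :: i | i <- L2]) k'.+1))
                 (d (nth [::] (L1 ++ [seq size cs1 :: i | i <- L2]) k')).
    by case: H => [[<- [<- E]] | [<- [<- E]]]; rewrite E in key.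
  have dF1 x : x \in L1 -> d x = c1 x by apply: dmapF1.
  clear H.
  have hs' : size L2 = (size l2).+1 by [].  
  rewrite size_cat size_map in Hk.
  case: (ltngtP k'.+1 (size L1)) => Hk1.
  - have Hk2 : k' < size l1 by rewrite -ltnS -hs.
    rewrite !nth_cat (ltnW Hk1) Hk1 Hk2 !dF1 ?mem_nth ?(ltnW Hk1) //.
    by move: (@hom_leaf _ _ k' hF1); rewrite L1E /= => /(_ Hk1).
  - have [j Ej] : exists j, k' = size L1 + j by exists (k' - size L1); rewrite subnKC.
    subst k'.
    have Hj : j.+1 < size L2 by move: Hk; rewrite -addnS ltn_add2l.
    rewrite -addnS !nth_cat !ltnNge !leq_addr /= !addKn.
    rewrite hs addSn -addnS leq_addr /= addKn /=.
    rewrite !(nth_map [::]) ?(ltnW Hj) //= eqxx.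
    move: (@hom_leaf _ _ j hF2); rewrite L2E /= => /(_ Hj).
    by case: (nth true l2 j); apply: hphi.
  - have Ek : k' = size l1 by apply/eqP; rewrite -eqSS -hs Hk1.
    rewrite !nth_cat -Hk1 ltnSn ltnn subnn dF1 ?mem_nth ?Hk1 //.
    rewrite hs ltnn Ek subnn /=.
    have -> : nth [::] L1 (size l1) = last [::] L1 by rewrite -nth_last hs.
    case: L2 hs' hs2 {Hk L2E} => [|y0 L2'] // _ hs2 /=; rewrite eqxx.
    by case: s2 hs2.
Qed.

Theorem lemma3 (F1 F2 : fan) (c1 c2 : seq nat -> 'I_7) :
  fan_wf F1 -> fan_wf F2 ->
  hom F1 c1 -> hom F2 c2 ->
  nat_of_ord (c1 (fan_root F1)) = 0 -> nat_of_ord (c1 (fl F1)) <> 0 ->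
  nat_of_ord (c1 (ll F1)) <> 0 ->
  nat_of_ord (c2 (fan_root F2)) = 0 -> nat_of_ord (c2 (fl F2)) <> 0 ->
  nat_of_ord (c2 (ll F2)) <> 0 ->
  forall s1 s2 : bool,
  exists d1 d2 : seq nat -> 'I_7,
    hom (compose F1 F2 s1 s2) d1 /\ hom (compose F1 F2 s1 s2) d2 /\
    (forall x, vertex F1 x -> d1 x = c1 x /\ d2 x = c1 x) /\
    d1 (ll (compose F1 F2 s1 s2)) <> d2 (ll (compose F1 F2 s1 s2)).
Proof.
case: F1 => [[cs1] ls1]; case: F2 => [[cs2] ls2].
move=> wf1 wf2 h1 h2 r1 f1 e1 r2 f2 e2 s1 s2.
have ne1 : cs1 <> [::] by move=> E; move: wf1; rewrite /fan_wf E.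
have ne2 : cs2 <> [::] by move=> E; move: wf2; rewrite /fan_wf E.
have L1E := @leavesN cs1 ls1 ne1.
have L2E := @leavesN cs2 ls2 ne2.
have hs1 : size (myaux 0 cs1) = (size ls1).+1 by rewrite -L1E.
have hs2 : size (myaux 0 cs2) = (size ls2).+1 by rewrite -L2E.
rewrite /fl /ll L1E /= in f1 e1.
rewrite /fl /ll L2E /= in f2 e2.
rewrite /fan_root in r1 r2.
have R1 : c1 [::] = ord0 by apply: val_inj.
have R2 : c2 [::] = ord0 by apply: val_inj.
have lt7 (x : 'I_7) : (x : nat) <> 0 -> 0 < x < 7.
  by move=> H; rewrite ltn_ord andbT lt0n; apply/eqP.
have [a1 [b1 [a2 [b2 [Ha1 Ha2 Hb1 Hb2 [V1 V2 Hne]]]]]] :=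
  @comb s1 s2 _ _ _ (lt7 _ e1) (lt7 _ f2) (lt7 _ e2).
have key a b : a \in [:: 1; 2; 4] -> b < 7 -> validn s1 s2
     (c1 (last [::] (myaux 0 cs1))) (c2 (head [::] (myaux 0 cs2))) a b ->
   hom (compose (Node cs1, ls1) (Node cs2, ls2) s1 s2) (dmap (size cs1) c1 c2 (aff a b)).
  move=> Ha Hb /andP [Va Vb].
  apply: hom_comp => //.
  - by move=> x y; apply: aff_hom.
  - by rewrite R1 R2; case: (s1) Va.
exists (dmap (size cs1) c1 c2 (aff a1 b1)), (dmap (size cs1) c1 c2 (aff a2 b2)).
split; first exact: key.
split; first exact: key.
split.
  case=> [|j a] //= Hv.
  have Hj : j < size cs1.
    move: Hv; rewrite /vertex /is_vertex /=.
    case: ltnP => // Hj.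
    by rewrite drop_oversize.
  by rewrite ltn_eqF.
rewrite /ll leaves_comp (@lvN cs2 ne2).
case E: (myaux 0 cs2) e2 Hne => [|y0 L2'] //= e2 Hne.
rewrite last_cat /= (last_map (cons (size cs1))) /= eqxx.
move=> Heq; move: Hne; rewrite -!affE Heq eqxx.
done.
Qed.
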